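(* Let $A_k>0$, $B_k>0$, $0<\alpha_k\le1$, let $e_k(n)=\frac{A_k}{n^{\alpha_k}+B_k}$, and for ${\bm{q}}\in\Delta_K$ and $N\ge1$ let $\bar e_k({\bm{q}})=\mathbb{E}_{n_k\sim\mathrm{Binom}(N,q_k)}[e_k(n_k)]$ and $f_k({\bm{q}})=\frac{A_k}{(q_kN)^{\alpha_k}+B_k}$. Then, when $Nq_k$ is large enough (i.e. $Nq_k\ge M$ for some threshold $M$ depending only on $A_k,B_k,\alpha_k$), $$|f_k({\bm{q}})-\bar e_k({\bm{q}})|\le\frac{320A_k}{B_k}\cdot\frac{1}{(Nq_k)^2}+\frac{\alpha_kA_k}{(Nq_k)^{\alpha_k+\frac14}}+\frac{\alpha_kA_k}{(Nq_k)^{\alpha_k+\frac12}}.$$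
   Context: $\Delta_K=\{{\bm{r}}\in\mathbb{R}^K:{\bm{r}}\ge0,\ \sum_kr_k=1\}$. $\bar e_k({\bm{q}})$ is the expected error on component $k$ of the power-law model when trained on $N$ i.i.d. samples from the mixture with proportions ${\bm{q}}$ (the count $n_k$ from component $k$ is $\mathrm{Binom}(N,q_k)$); $f_k$ is the ''approximate subpopulation error function''. *)

(* Defs.v *)
From mathcomp Require Import all_boot all_order all_algebra.
From mathcomp Require Import all_classical all_reals all_analysis.
Set Implicit Arguments. Unset Strict Implicit. Unset Printing Implicit Defensive.
Import Order.TTheory GRing.Theory Num.Theory.
Local Open Scope ring_scope.

Definition simplex {R : realType} (K : nat) (q : 'I_K -> R) : Prop :=
  (forall k, 0 <= q k) /\ \sum_(k < K) q k = 1.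

Definition pl_err {R : realType} (A B alpha : R) (n : nat) : R :=
  A / ((n%:R) `^ alpha + B).

Definition binom_pmf {R : realType} (N : nat) (p : R) (n : nat) : R :=
  'C(N, n)%:R * p ^+ n * (1 - p) ^+ (N - n).

Definition expected_err {R : realType} (A B alpha : R) (N : nat) (p : R) : R :=
  \sum_(n < N.+1) binom_pmf N p n * pl_err A B alpha n.

Definition approx_err {R : realType} (A B alpha : R) (N : nat) (p : R) : R :=
  A / ((p * N%:R) `^ alpha + B).

(* Main.v *)
Require Import Defs.
From mathcomp Require Import all_boot all_order all_algebra.
From mathcomp Require Import all_classical all_reals all_analysis.
From mathcomp Require Import ring lra.
Import Order.TTheory GRing.Theory Num.Theory.
Local Open Scope ring_scope.

Lemma bern (R : realType) (t a : R) : 0 < t -> 0 <= a -> a <= 1 ->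
  t `^ a <= 1 + a * (t - 1).
Proof.
move=> t0 a0 a1.
have := @concave_ln R (Itv01 a0 a1) t 1 t0 ltr01.
rewrite !convRE /= ln1 mulr0 addr0 => H.
have hp : 0 < a * t + (1 - a) * 1 by nra.
rewrite /powR gt_eqF //.
apply: le_trans (_ : expR (ln (a * t + (1 - a) * 1)) <= _).
  by rewrite ler_expR.
rewrite lnK ?posrE //.
by rewrite le_eqVlt; apply/orP; left; apply/eqP; ring.
Qed.

Lemma mom (R : realType) (p : R) j N :
  \sum_(n < N.+1) binom_pmf N p n * 'C(n, j)%:R = 'C(N, j)%:R * p ^+ j.
Proof.
elim: j N => [|j IH] N.
  rewrite bin0 expr0 mulr1.
  under eq_bigr do rewrite bin0 mulr1.
  have -> : 1 = ((1 - p) + p) ^+ N by rewrite subrK expr1n.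
  rewrite exprDn; apply: eq_bigr => i _.
  by rewrite /binom_pmf -mulr_natl; ring.
case: N => [|N].
  by rewrite big_ord_recl big_ord0 !bin0n /= mulr0 mul0r addr0.
rewrite big_ord_recl bin0n /= mulr0 add0r.
apply: (@mulfI _ (j.+1)%:R); first by rewrite pnatr_eq0.
rewrite mulr_sumr.
have -> : \sum_(i < N.+1) (j.+1)%:R * (binom_pmf N.+1 p (bump 0 i) * 'C(bump 0 i, j.+1)%:R)
   = (N.+1)%:R * p * \sum_(i < N.+1) binom_pmf N p i * 'C(i, j)%:R.
  rewrite mulr_sumr; apply: eq_bigr => i _.
  rewrite /bump /= add1n /binom_pmf subSS.
  have h1 := mul_bin_diag N.+1 i.
  have h2 := mul_bin_diag i.+1 j.
  have e1 : (N.+1)%:R * ('C(N, i))%:R = (i.+1)%:R * ('C(N.+1, i.+1))%:R :> R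
    by rewrite -!natrM h1.
  have e2 : (i.+1)%:R * ('C(i, j))%:R = (j.+1)%:R * ('C(i.+1, j.+1))%:R :> R
    by rewrite -!natrM h2.
  rewrite exprS.
  have -> : (j.+1)%:R * ('C(N.+1, i.+1)%:R * (p * p ^+ i) * (1 - p) ^+ (N - i) *
     'C(i.+1, j.+1)%:R) = ('C(N.+1, i.+1)%:R * ((j.+1)%:R * 'C(i.+1, j.+1)%:R)) * (p * p ^+ i) * (1 - p) ^+ (N - i) :> R by ring.
  rewrite -e2.
  have -> : ('C(N.+1, i.+1)%:R * ((i.+1)%:R * 'C(i, j)%:R)) * (p * p ^+ i) * (1 - p) ^+ (N - i)
     = ((i.+1)%:R * 'C(N.+1, i.+1)%:R) * 'C(i, j)%:R * (p * p ^+ i) * (1 - p) ^+ (N - i) :> R by ring.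
  rewrite -e1; ring.
rewrite IH.
have h := mul_bin_diag N.+1 j.
have e : (N.+1)%:R * ('C(N, j))%:R = (j.+1)%:R * ('C(N.+1, j.+1))%:R :> R
  by rewrite -!natrM h.
rewrite exprS.
transitivity (((N.+1)%:R * 'C(N, j)%:R) * (p * p ^+ j) :> R); first by ring.
rewrite e; ring.
Qed.

Lemma binR (R : realType) n m :
  (m.+1)%:R * ('C(n, m.+1))%:R = (n%:R - m%:R) * ('C(n, m))%:R :> R.
Proof.
case: (leqP m n) => h.
  by rewrite -natrB // -!natrM mul_bin_left.
by rewrite !bin_small ?mulr0 // ltnW.
Qed.

Lemma cform (R : realType) n :
  [/\ ('C(n, 1))%:R = n%:R :> R,
      ('C(n, 2))%:R = n%:R * (n%:R - 1) / 2 :> R,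
      ('C(n, 3))%:R = n%:R * (n%:R - 1) * (n%:R - 2) / 6 :> R &
      ('C(n, 4))%:R = n%:R * (n%:R - 1) * (n%:R - 2) * (n%:R - 3) / 24 :> R].
Proof.
have h1 : (('C(n, 1))%:R = n%:R :> R) by rewrite bin1.
have h2 := binR R n 1. have h3 := binR R n 2. have h4 := binR R n 3.
rewrite h1 in h2.
have e2 : (('C(n, 2))%:R = n%:R * (n%:R - 1) / 2 :> R).
  apply: (@mulfI _ 2); first by rewrite pnatr_eq0.
  rewrite h2; by field.
rewrite e2 in h3.
have e3 : (('C(n, 3))%:R = n%:R * (n%:R - 1) * (n%:R - 2) / 6 :> R).
  apply: (@mulfI _ 3); first by rewrite pnatr_eq0.
  rewrite h3; by field.
rewrite e3 in h4.
split => //.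
apply: (@mulfI _ 4); first by rewrite pnatr_eq0.
rewrite h4; by field.
Qed.

Lemma Elin (R : realType) (p : R) N k (a : nat -> R) :
  \sum_(n < N.+1) binom_pmf N p n * (\sum_(j < k) a j * ('C(n, j))%:R)
  = \sum_(j < k) a j * (('C(N, j))%:R * p ^+ j).
Proof.
under eq_bigr do rewrite mulr_sumr.
rewrite exchange_big; apply: eq_bigr => j _ /=.
rewrite -mom mulr_sumr; apply: eq_bigr => n _; ring.
Qed.

Definition co4 (R : realType) (x : R) (j : nat) : R :=
  nth 0 [:: x ^+ 4; 1 - 4 * x + 6 * x ^+ 2 - 4 * x ^+ 3; 14 - 24 * x + 12 * x ^+ 2;
            36 - 24 * x; 24] j.

Definition co2 (R : realType) (x : R) (j : nat) : R :=
  nth 0 [:: x ^+ 2; 1 - 2 * x; 2] j.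

Arguments co4 {R}.
Arguments co2 {R}.
Lemma E4 (R : realType) (p : R) N :
  \sum_(n < N.+1) binom_pmf N p n * (n%:R - N%:R * p) ^+ 4
  = N%:R * p * (1 - p) * (1 + 3 * (N%:R - 2) * p * (1 - p)).
Proof.
transitivity (\sum_(n < N.+1) binom_pmf N p n *
     (\sum_(j < 5) co4 (N%:R * p) j * ('C(n, j))%:R)).
  apply: eq_bigr => n _; congr (_ * _).
  rewrite !big_ord_recl big_ord0 /= /co4 /=.
  have [c1 c2 c3 c4] := cform R n.
  rewrite bin0 c1 c2 c3 c4; by field.
rewrite Elin !big_ord_recl big_ord0 /= /co4 /=.
have [c1 c2 c3 c4] := cform R N.
rewrite bin0 c1 c2 c3 c4; by field.
Qed.

Lemma E2 (R : realType) (p : R) N :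
  \sum_(n < N.+1) binom_pmf N p n * (n%:R - N%:R * p) ^+ 2
  = N%:R * p * (1 - p).
Proof.
transitivity (\sum_(n < N.+1) binom_pmf N p n *
     (\sum_(j < 3) co2 (N%:R * p) j * ('C(n, j))%:R)).
  apply: eq_bigr => n _; congr (_ * _).
  rewrite !big_ord_recl big_ord0 /= /co2 /=.
  have [c1 c2 c3 c4] := cform R n.
  rewrite bin0 c1 c2; by field.
rewrite Elin !big_ord_recl big_ord0 /= /co2 /=.
have [c1 c2 c3 c4] := cform R N.
rewrite bin0 c1 c2; by field.
Qed.

Lemma E0 (R : realType) (p : R) N :
  \sum_(n < N.+1) binom_pmf N p n = 1.
Proof.
have := @mom R p 0 N. rewrite bin0 expr0 mulr1 => H; rewrite -[RHS]H.
by apply: eq_bigr => n _; rewrite bin0 mulr1.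
Qed.

Lemma dpow {R : realType} (a x y : R) : 0 < x -> 0 <= y -> a <= 1 -> 0 <= a ->
  x <= y -> exists r, y `^ a = r * x `^ a /\ r <= 1 + a * (y / x - 1).
Proof.
move=> x0 y0 a1 a0 xy.
exists ((y / x) `^ a); split.
  rewrite -powRM ?divfK ?gt_eqF // ?divr_ge0 // ltW //.
have yx0 : 0 < y / x by rewrite divr_gt0 // (lt_le_trans x0 xy).
exact: bern.
Qed.

Lemma key (R : realType) (a x y : R) : 0 < a -> a <= 1 -> 0 < x -> x / 2 <= y ->
  `|y `^ a - x `^ a| * x <= 2 * a * `|y - x| * y `^ a.
Proof.
move=> a0 a1 x0 hy.
have y0 : 0 < y by apply: lt_le_trans hy; rewrite divr_gt0.
have v0 : 0 < x `^ a by rewrite powR_gt0.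
have u0 : 0 < y `^ a by rewrite powR_gt0.
case: (leP x y) => hxy.
  have [r [hu hr]] := dpow a x y x0 (ltW y0) a1 (ltW a0) hxy.
  have vu : x `^ a <= y `^ a by rewrite ge0_ler_powR // ?nnegrE ltW.
  rewrite !ger0_norm ?subr_ge0 //.
  set t := y / x in hr. have ht : t * x = y by rewrite /t divfK ?gt_eqF.
  set u := y `^ a in hu vu u0 *; set v := x `^ a in hu vu v0 *.
  have h1 : (u - v) * x <= a * (t - 1) * v * x.
    rewrite hu -ler_pdivlMr // mulrK ?unitfE ?gt_eqF //.
    have -> : r * v - v = (r - 1) * v by ring.
    by rewrite ler_pM2r //; lra.
  have h2 : a * (t - 1) * v * x = a * (y - x) * v by rewrite -ht; ring.
  have h3 : a * (y - x) * v <= a * (y - x) * u.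
    by apply: ler_wpM2l => //; rewrite mulr_ge0 ?subr_ge0 // ltW.
  have h4 : 0 <= a * (y - x) * u by rewrite !mulr_ge0 ?subr_ge0 // ltW.
  lra.
have [r [hv hr]] := dpow a y x y0 (ltW x0) a1 (ltW a0) (ltW hxy).
have vu : y `^ a <= x `^ a by rewrite ge0_ler_powR // ?nnegrE ltW.
rewrite distrC (distrC y) !ger0_norm ?subr_ge0 //; last exact: ltW.
set t := x / y in hr. have ht : t * y = x by rewrite /t divfK ?gt_eqF.
have t2 : t <= 2.
  by rewrite /t ler_pdivrMr //; lra.
set u := y `^ a in hv vu u0 *; set v := x `^ a in hv vu v0 *.
have h1 : (v - u) * x <= a * (t - 1) * u * x.
  rewrite hv -ler_pdivlMr // mulrK ?unitfE ?gt_eqF //.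
  have -> : r * u - u = (r - 1) * u by ring.
  by rewrite ler_pM2r //; lra.
have h2 : a * (t - 1) * u * x = a * u * t * (x - y) by rewrite -ht; ring.
have h3 : a * u * t * (x - y) <= a * u * 2 * (x - y).
  apply: ler_wpM2r; first by rewrite subr_ge0 ltW.
  by apply: ler_wpM2l => //; rewrite mulr_ge0 // ltW.
lra.
Qed.

Lemma gbnd (R : realType) (A B w : R) : 0 < A -> 0 < B -> 0 <= w ->
  0 <= A / (w + B) <= A / B.
Proof.
move=> A0 B0 w0; apply/andP; split.
  by rewrite divr_ge0 // ltW // ltr_wpDl.
rewrite ler_pdivrMr ?ltr_wpDl //.
have -> : A / B * (w + B) = A + A / B * w by field; rewrite gt_eqF.
by rewrite lerDl mulr_ge0 // ltW // divr_gt0.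
Qed.

Lemma pw (R : realType) (A B a x y : R) : 0 < A -> 0 < B -> 0 < a -> a <= 1 ->
  1 <= x -> 0 <= y ->
  `|A / (x `^ a + B) - A / (y `^ a + B)|
    <= 16 * A / (B * x ^+ 4) * (y - x) ^+ 4 + 2 * A * a / (x * x `^ a) * `|y - x|.
Proof.
move=> A0 B0 a0 a1 x1 y0.
have x0 : 0 < x by apply: lt_le_trans x1.
set v := x `^ a; set u := y `^ a.
have v0 : 0 < v by rewrite powR_gt0.
have u0 : 0 <= u by rewrite powR_ge0.
have hQ : 0 <= 2 * A * a / (x * v) * `|y - x|.
  by rewrite mulr_ge0 // divr_ge0 ?mulr_ge0 // ltW.
have hc : 0 <= 16 * A / (B * x ^+ 4).
  by rewrite divr_ge0 ?mulr_ge0 ?exprn_ge0 // ltW.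
have hP : 0 <= 16 * A / (B * x ^+ 4) * (y - x) ^+ 4.
  by rewrite mulr_ge0 // (_ : 4 = 2 * 2)%N // exprM sqr_ge0.
case: (ltP y (x / 2)) => hy.
  have /andP [g1a g1b] := @gbnd R A B v A0 B0 (ltW v0).
  have /andP [g2a g2b] := @gbnd R A B u A0 B0 u0.
  have hL : `|A / (v + B) - A / (u + B)| <= A / B.
    by rewrite ler_norml; apply/andP; split; lra.
  have d : x / 2 <= x - y by lra.
  have d4 : (x / 2) ^+ 4 <= (y - x) ^+ 4.
    have -> : (y - x) ^+ 4 = (x - y) ^+ 4 by ring.
    by apply: lerXn2r; rewrite ?nnegrE //; lra.
  have hP2 : A / B <= 16 * A / (B * x ^+ 4) * (y - x) ^+ 4.
    apply: le_trans (ler_wpM2l hc d4).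
    rewrite le_eqVlt; apply/orP; left; apply/eqP.
    field; rewrite ?gt_eqF // expf_neq0 // gt_eqF.
  lra.
have y0' : 0 < y by apply: lt_le_trans hy; rewrite divr_gt0.
have k := @key R a x y a0 a1 x0 hy; rewrite -/u -/v in k.
have e : A / (v + B) - A / (u + B) = A * (u - v) / ((u + B) * (v + B)).
  by field; rewrite ?gt_eqF // ?ltr_wpDl // ltW.
have W0 : 0 < (u + B) * (v + B) by rewrite mulr_gt0 ?ltr_wpDl // ltW.
rewrite e normrM normfV (gtr0_norm W0) normrM (gtr0_norm A0).
apply: le_trans (_ : 2 * A * a / (x * v) * `|y - x| <= _); last by lra.
rewrite ler_pdivrMr //.
have -> : 2 * A * a / (x * v) * `|y - x| * ((u + B) * (v + B))
   = (2 * A * a * `|y - x| * ((u + B) * (v + B))) / (x * v).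
  by field; rewrite ?gt_eqF.  
rewrite ler_pdivlMr ?mulr_gt0 //.
have k2 : A * `|u - v| * (x * v) <= 2 * A * a * `|y - x| * (u * v).
  have -> : A * `|u - v| * (x * v) = (A * v) * (`|u - v| * x) by ring.
  have -> : 2 * A * a * `|y - x| * (u * v) = (A * v) * (2 * a * `|y - x| * u) by ring.
  by apply: ler_wpM2l => //; rewrite mulr_ge0 // ltW.
have k3 : u * v <= (u + B) * (v + B) by nra.
have k4 : 0 <= 2 * A * a * `|y - x| by rewrite !mulr_ge0 // ltW.
apply: le_trans k2 _; exact: ler_wpM2l.
Qed.

Theorem propositionA2 (R : realType) (A B alpha : R) :
  0 < A -> 0 < B -> 0 < alpha -> alpha <= 1 ->
  exists M : R,
    forall (K : nat) (q : 'I_K -> R) (k : 'I_K) (N : nat),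
      simplex q -> (1 <= N)%N -> M <= N%:R * q k ->
      `| approx_err A B alpha N (q k) - expected_err A B alpha N (q k) |
        <= 320 * A / B / (N%:R * q k) ^+ 2
           + alpha * A / (N%:R * q k) `^ (alpha + 4^-1)
           + alpha * A / (N%:R * q k) `^ (alpha + 2^-1).
Proof.
move=> A0 B0 a0 a1; exists 1 => K q k N [qge0 qsum] N1 x1.
set p := q k.
have p0 : 0 <= p by exact: qge0.
have p1 : p <= 1.
  rewrite -qsum (bigD1 k) //= lerDl; exact: sumr_ge0.
set x := N%:R * p in x1 *.
have x0 : 0 < x by apply: lt_le_trans x1.
set G := fun t : R => A / (t `^ alpha + B).
have hap : approx_err A B alpha N p = G x by rewrite /approx_err /G /x (mulrC N%:R).
have hex : expected_err A B alpha N p = \sum_(n < N.+1) binom_pmf N p n * G n%:R by [].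
rewrite hap hex.
have pmf0 : forall n, 0 <= binom_pmf N p n.
  by move=> n; rewrite /binom_pmf !mulr_ge0 ?exprn_ge0 ?subr_ge0.
set v := x `^ alpha.
set s := Num.sqrt x.
have v0 : 0 < v by rewrite powR_gt0.
have s0 : 0 < s by rewrite sqrtr_gt0.
have ss : s * s = x by rewrite -expr2 sqr_sqrtr // ltW.
set c4 := 16 * A / (B * x ^+ 4).
set U := 2 * A * alpha / (x * v).
have U0 : 0 <= U by rewrite divr_ge0 ?mulr_ge0 // ltW.
have c40 : 0 <= c4 by rewrite divr_ge0 ?mulr_ge0 ?exprn_ge0 // ltW.
have e1 : G x - \sum_(n < N.+1) binom_pmf N p n * G n%:R
        = \sum_(n < N.+1) binom_pmf N p n * (G x - G n%:R).
  have -> : \sum_(n < N.+1) binom_pmf N p n * (G x - G n%:R)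
     = \sum_(n < N.+1) binom_pmf N p n * G x - \sum_(n < N.+1) binom_pmf N p n * G n%:R.
    by rewrite -sumrB; apply: eq_bigr => n _; ring.
  by rewrite -mulr_suml E0 mul1r.
rewrite e1.
have step : `|\sum_(n < N.+1) binom_pmf N p n * (G x - G n%:R)|
   <= \sum_(n < N.+1) binom_pmf N p n *
        (c4 * (n%:R - x) ^+ 4 + U / (2 * s) * (n%:R - x) ^+ 2 + U * s / 2).
  apply: le_trans (ler_norm_sum _ _ _) _.
  apply: ler_sum => n _.
  rewrite normrM (ger0_norm (pmf0 n)); apply: ler_wpM2l => //.
  have := @pw R A B alpha x n%:R A0 B0 a0 a1 x1 (ler0n _ _).
  rewrite -/v -/c4 -/U => h.
  apply: le_trans h _.
  set d := n%:R - x.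
  have hd : `|d| ^+ 2 = d ^+ 2 by rewrite real_normK // num_real.
  have H : 0 <= (`|d| - s) ^+ 2 by rewrite sqr_ge0.
  have H2 : 2 * s * `|d| <= d ^+ 2 + s * s.
    rewrite -hd; move: H; rewrite sqrrB; lra.
  have am : `|d| <= (2 * s)^-1 * d ^+ 2 + s / 2.
    have -> : (2 * s)^-1 * d ^+ 2 + s / 2 = (d ^+ 2 + s * s) / (2 * s).
      by field; rewrite gt_eqF.
    by rewrite ler_pdivlMr ?mulr_gt0 // mulrC.
  have am' := ler_wpM2l U0 am.
  have -> : U / (2 * s) * d ^+ 2 = U * ((2 * s)^-1 * d ^+ 2) by ring.
  have -> : U * s / 2 = U * (s / 2) by ring.
  rewrite mulrDr in am'.
  lra.
apply: le_trans step _.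
have -> : \sum_(n < N.+1) binom_pmf N p n *
        (c4 * (n%:R - x) ^+ 4 + U / (2 * s) * (n%:R - x) ^+ 2 + U * s / 2)
   = c4 * \sum_(n < N.+1) binom_pmf N p n * (n%:R - x) ^+ 4
     + U / (2 * s) * \sum_(n < N.+1) binom_pmf N p n * (n%:R - x) ^+ 2
     + U * s / 2 * \sum_(n < N.+1) binom_pmf N p n.
  by rewrite !mulr_sumr -!big_split; apply: eq_bigr => n _ /=; ring.
have h4 := @E4 R p N; have h2 := @E2 R p N; have h0 := @E0 R p N.
rewrite -/x in h4 h2.
rewrite h4 h2 h0.
have N1r : 1 <= N%:R :> R by rewrite ler1n.
have f4 : x * (1 - p) * (1 + 3 * (N%:R - 2) * p * (1 - p)) <= 4 * x ^+ 2.
  have xe : x = N%:R * p by [].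
  have q1 : (1 - p) ^+ 2 <= 1 by rewrite expr2; nra.
  have g1 : (N%:R - 2) * (1 - p) ^+ 2 <= N%:R.
    have : 0 <= (1 - p) ^+ 2 by rewrite sqr_ge0.
    nra.
  have g2 : x * (1 - p) <= x ^+ 2 by nra.
  have g3 : 3 * (N%:R - 2) * x * p * (1 - p) ^+ 2 <= 3 * x ^+ 2.
    have -> : 3 * (N%:R - 2) * x * p * (1 - p) ^+ 2 = 3 * (N%:R * p ^+ 2) * ((N%:R - 2) * (1 - p) ^+ 2).
      by rewrite xe; ring.
    have -> : 3 * x ^+ 2 = 3 * (N%:R * p ^+ 2) * N%:R by rewrite xe; ring.
    apply: ler_wpM2l => //; rewrite !mulr_ge0 ?exprn_ge0 // ?ler0n // ltW // ltr01.
  have -> : x * (1 - p) * (1 + 3 * (N%:R - 2) * p * (1 - p))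
     = x * (1 - p) + 3 * (N%:R - 2) * x * p * (1 - p) ^+ 2 by ring.
  lra.
have T1 : c4 * (x * (1 - p) * (1 + 3 * (N%:R - 2) * p * (1 - p))) <= 320 * A / B / x ^+ 2.
  apply: le_trans (ler_wpM2l c40 f4) _.
  have -> : c4 * (4 * x ^+ 2) = 64 * A / B / x ^+ 2.
    by rewrite /c4; field; rewrite ?gt_eqF // ?expf_neq0 // gt_eqF.
  rewrite ler_pM2r ?invr_gt0 ?exprn_gt0 // ler_pM2r ?invr_gt0 //.
  rewrite ler_pM2r //; lra.
have T2 : U / (2 * s) * (x * (1 - p)) <= U * s / 2.
  have -> : U * s / 2 = U / (2 * s) * x by rewrite -ss; field; rewrite gt_eqF.
  apply: ler_wpM2l; first by rewrite divr_ge0 // mulr_ge0 // ltW.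
  nra.
have Us : U * s = 2 * (alpha * A / (v * s)).
  by rewrite /U -ss; field; rewrite ?gt_eqF.
have pw12 : x `^ (alpha + 2^-1) = v * s.
  rewrite powRD; last by apply/implyP => _; rewrite gt_eqF.
  by rewrite powR12_sqrt // ltW.
have pw14 : x `^ (alpha + 4^-1) <= v * s.
  rewrite -pw12; apply: ler_powR => //.
  rewrite lerD2l; lra.
have T3 : alpha * A / (v * s) <= alpha * A / x `^ (alpha + 4^-1).
  rewrite ler_pM2l ?mulr_gt0 //.
  have pa : 0 < x `^ (alpha + 4^-1) by apply: powR_gt0.
  have vs : 0 < v * s by apply: mulr_gt0.
  by rewrite lef_pV2 ?posrE.
rewrite pw12 mulr1.
lra.
Qed.
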